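(* Let $n\in\mathbb N$. Then there exist $k\in\mathbb N$ and a unital ${}^\ast$-homomorphism $Z_{n,n+1}\to Z_{2^k,2^k+1}$.
   Context: For natural numbers $p,q$, $Z_{p,q}=\{f\in C([0,1],M_p\otimes M_q): f(0)\in M_p\otimes1_q,\ f(1)\in1_p\otimes M_q\}$. *)

(* Defs.v *)
From mathcomp Require Import all_boot all_order all_algebra.
From mathcomp Require Import reals complex mxtens.
Set Implicit Arguments. Unset Strict Implicit. Unset Printing Implicit Defensive.
Import Order.TTheory GRing.Theory Num.Theory.
Local Open Scope ring_scope.

Definition unit_interval (R : realType) := {t : R | (0 <= t) && (t <= 1)}.

Definition ui0 (R : realType) : unit_interval R :=
  exist _ 0 (introT andP (conj (lexx 0) ler01)).
Definition ui1 (R : realType) : unit_interval R :=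
  exist _ 1 (introT andP (conj ler01 (lexx 1))).

(* Continuity of a map [0,1] -> M_N(C), written out entrywise (all norms on
   M_N(C) are equivalent), via the real and imaginary parts of the entries. *)
Definition cont_mx (R : realType) (N : nat)
  (f : unit_interval R -> 'M[R[i]]_N) : Prop :=
  forall (t : unit_interval R) (eps : R), 0 < eps ->
  exists2 delta : R, 0 < delta &
    forall s : unit_interval R, `|sval s - sval t| < delta ->
      forall i j : 'I_N,
        `|complex.Re (f s i j) - complex.Re (f t i j)| < eps /\
        `|complex.Im (f s i j) - complex.Im (f t i j)| < eps.

(* The dimension-drop algebra
   Z_{p,q} = { f in C([0,1], M_p (x) M_q) : f(0) in M_p (x) 1_q,
                                            f(1) in 1_p (x) M_q },
   with M_p (x) M_q identified with M_{p*q} via the Kronecker product. *)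
Definition in_Z (R : realType) (p q : nat)
  (f : unit_interval R -> 'M[R[i]]_(p * q)) : Prop :=
  cont_mx f /\
  (exists A : 'M[R[i]]_p, f (ui0 R) = A *t (1%:M : 'M[R[i]]_q)) /\
  (exists B : 'M[R[i]]_q, f (ui1 R) = (1%:M : 'M[R[i]]_p) *t B).

Definition Z_alg (R : realType) (p q : nat) :=
  {f : unit_interval R -> 'M[R[i]]_(p * q) | in_Z f}.

Definition adj_mx (R : realType) (N : nat) (A : 'M[R[i]]_N) : 'M[R[i]]_N :=
  map_mx (@conjc R) A^T.

Definition unital_star_hom (R : realType) (p q p' q' : nat)
  (phi : Z_alg R p q -> Z_alg R p' q') : Prop :=
  [/\ (forall f g : Z_alg R p q, forall h : Z_alg R p q,
         (forall t, sval h t = sval f t + sval g t) ->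
         forall t, sval (phi h) t = sval (phi f) t + sval (phi g) t),
      (forall (c : R[i]) (f h : Z_alg R p q),
         (forall t, sval h t = c *: sval f t) ->
         forall t, sval (phi h) t = c *: sval (phi f) t),
      (forall f g h : Z_alg R p q,
         (forall t, sval h t = sval f t *m sval g t) ->
         forall t, sval (phi h) t = sval (phi f) t *m sval (phi g) t),
      (forall f h : Z_alg R p q,
         (forall t, sval h t = adj_mx (sval f t)) ->
         forall t, sval (phi h) t = adj_mx (sval (phi f) t)) &
      (forall u : Z_alg R p q, (forall t, sval u t = 1%:M) ->
         forall t, sval (phi u) t = 1%:M)].

(* Main.v *)
Require Import Defs.
From mathcomp Require Import all_boot all_order all_algebra all_fingroup.
From mathcomp Require Import reals complex mxtens.
From mathcomp Require Import ring lra zify.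
Set Implicit Arguments. Unset Strict Implicit. Unset Printing Implicit Defensive.
Import Order.TTheory GRing.Theory Num.Theory.
Local Open Scope ring_scope.

Section Cont.
Variable R : realType.
Local Notation UI := (unit_interval R).

Definition rc (g : UI -> R) : Prop :=
  forall (t : UI) (eps : R), 0 < eps ->
  exists2 d : R, 0 < d & forall s : UI, `|sval s - sval t| < d -> `|g s - g t| < eps.

Lemma rc_const c : rc (fun _ => c).
Proof. by move=> t eps e0; exists 1 => // s _; rewrite subrr normr0. Qed.

Lemma rc_val : rc (fun t => sval t).
Proof. by move=> t eps e0; exists eps. Qed.

Lemma rc_add g h : rc g -> rc h -> rc (fun t => g t + h t).
Proof.
move=> cg ch t eps e0.
have e2 : 0 < eps / 2 by rewrite divr_gt0.
have [d1 d10 H1] := cg t _ e2; have [d2 d20 H2] := ch t _ e2.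
exists (Num.min d1 d2); first by rewrite lt_min d10 d20.
move=> s; rewrite lt_min => /andP[s1 s2].
have := H1 _ s1; have := H2 _ s2 => a1 a2.
rewrite (_ : g s + h s - (g t + h t) = (g s - g t) + (h s - h t)); last by rewrite opprD addrACA.
apply: (le_lt_trans (ler_normD _ _)); lra.
Qed.

Lemma rc_opp g : rc g -> rc (fun t => - g t).
Proof.
move=> cg t eps e0; have [d d0 H] := cg t _ e0; exists d => // s hs.
by rewrite -opprD normrN; apply: H.
Qed.

Lemma norm3 (x y z : R) : `|x + y + z| <= `|x| + `|y| + `|z|.
Proof.
apply: (le_trans (ler_normD _ _)); rewrite lerD2r; exact: ler_normD.
Qed.

Lemma rc_mul g h : rc g -> rc h -> rc (fun t => g t * h t).
Proof.
move=> cg ch t eps e0.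
set G := `|g t|; set H := `|h t|.
have G0 : 0 <= G by apply: normr_ge0.
have H0 : 0 <= H by apply: normr_ge0.
set e1 := Num.min 1 (eps / (G + H + 2)).
have e10 : 0 < e1 by rewrite lt_min ltr01 divr_gt0 //; lra.
have e11 : e1 <= 1 by rewrite ge_min lexx.
have e12 : e1 * (G + H + 2) <= eps.
  by rewrite -ler_pdivlMr ?ge_min ?lexx ?orbT //; lra.
have [d1 d10 H1] := cg t _ e10; have [d2 d20 H2] := ch t _ e10.
exists (Num.min d1 d2); first by rewrite lt_min d10 d20.
move=> s; rewrite lt_min => /andP[s1 s2].
have := H1 _ s1; have := H2 _ s2 => a1 a2.
rewrite (_ : g s * h s - g t * h t = (g s - g t) * (h s - h t) + (g s - g t) * h t + g t * (h s - h t)); last by ring.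
set u := `|g s - g t| in a2; set v := `|h s - h t| in a1.
have u0 : 0 <= u by apply: normr_ge0.
have v0 : 0 <= v by apply: normr_ge0.
apply: (le_lt_trans (norm3 _ _ _)); rewrite !normrM -/G -/H -/u -/v.
have : u * v <= e1 * e1 by apply: ler_pM => //; apply: ltW.
have : u * H <= e1 * H by apply: ler_wpM2r => //; apply: ltW.
have : G * v <= G * e1 by apply: ler_wpM2l => //; apply: ltW.
have : e1 * e1 <= e1 * 1 by apply: ler_wpM2l => //; apply: ltW.
nra.
Qed.

Lemma rc_inv g m : 0 < m -> (forall s, m <= g s) -> rc g -> rc (fun t => (g t)^-1).
Proof.
move=> m0 gm cg t eps e0.
have e1 : 0 < eps * (m * m) by rewrite !mulr_gt0.
have [d d0 H] := cg t _ e1; exists d => // s hs.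
have gs0 : 0 < g s by apply: lt_le_trans (gm s).
have gt0 : 0 < g t by apply: lt_le_trans (gm t).
rewrite (_ : (g s)^-1 - (g t)^-1 = (g t - g s) / (g s * g t)); last first.
  by field; apply/andP; split; rewrite gt_eqF.
rewrite normrM normfV distrC (gtr0_norm (mulr_gt0 gs0 gt0)).
rewrite ltr_pdivrMr ?mulr_gt0 //.
apply: (lt_le_trans (H _ hs)); rewrite ler_pM2l //.
by apply: ler_pM => //; apply: ltW.
Qed.

End Cont.

Section CCont.
Variable R : realType.
Local Notation UI := (unit_interval R).
Local Notation C := (R[i]).

Lemma ReD (x y : C) : complex.Re (x + y) = complex.Re x + complex.Re y.
Proof. by case: x; case: y. Qed.
Lemma ImD (x y : C) : complex.Im (x + y) = complex.Im x + complex.Im y.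
Proof. by case: x; case: y. Qed.
Lemma ReM (x y : C) : complex.Re (x * y) = complex.Re x * complex.Re y - complex.Im x * complex.Im y.
Proof. by case: x; case: y. Qed.
Lemma ImM (x y : C) : complex.Im (x * y) = complex.Re x * complex.Im y + complex.Im x * complex.Re y.
Proof. by case: x => a b; case: y => c d /=; rewrite addrC. Qed.
Lemma ReJ (x : C) : complex.Re (conjc x) = complex.Re x.
Proof. by case: x. Qed.
Lemma ImJ (x : C) : complex.Im (conjc x) = - complex.Im x.
Proof. by case: x. Qed.

Definition cc (h : UI -> C) : Prop :=
  rc (fun t => complex.Re (h t)) /\ rc (fun t => complex.Im (h t)).

Lemma rc_ext (g h : UI -> R) : (forall t, g t = h t) -> rc g -> rc h.
Proof.
move=> e cg t eps e0; have [d d0 H] := cg t _ e0; exists d => // s hs.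
by rewrite -!e; apply: H.
Qed.

Lemma cc_ext (g h : UI -> C) : (forall t, g t = h t) -> cc g -> cc h.
Proof.
by move=> e [c1 c2]; split; [apply: rc_ext c1|apply: rc_ext c2] => t; rewrite e.
Qed.

Lemma cc_const c : cc (fun _ => c).
Proof. by split; apply: rc_const. Qed.

Lemma cc_add g h : cc g -> cc h -> cc (fun t => g t + h t).
Proof.
move=> [g1 g2] [h1 h2]; split.
  by apply: rc_ext (rc_add g1 h1) => t; rewrite ReD.
by apply: rc_ext (rc_add g2 h2) => t; rewrite ImD.
Qed.

Lemma cc_mul g h : cc g -> cc h -> cc (fun t => g t * h t).
Proof.
move=> [g1 g2] [h1 h2]; split.
  by apply: rc_ext (rc_add (rc_mul g1 h1) (rc_opp (rc_mul g2 h2))) => t; rewrite ReM.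
by apply: rc_ext (rc_add (rc_mul g1 h2) (rc_mul g2 h1)) => t; rewrite ImM.
Qed.

Lemma cc_conj g : cc g -> cc (fun t => conjc (g t)).
Proof.
move=> [g1 g2]; split.
  by apply: rc_ext g1 => t; rewrite ReJ.
by apply: rc_ext (rc_opp g2) => t; rewrite ImJ.
Qed.

Lemma cc_complex g1 g2 : rc g1 -> rc g2 -> cc (fun t => (g1 t +i* g2 t)%C).
Proof. by move=> c1 c2; split. Qed.

Lemma cc_sum (I : finType) (F : I -> UI -> C) :
  (forall k, cc (F k)) -> cc (fun t => \sum_k F k t).
Proof.
move=> cF; rewrite /=.
elim: (index_enum I) => [|k r IH].
  by apply: cc_ext (cc_const 0) => t; rewrite big_nil.
by apply: cc_ext (cc_add (cF k) IH) => t; rewrite big_cons.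
Qed.

Definition cm m n (F : UI -> 'M[C]_(m, n)) := forall i j, cc (fun t => F t i j).

Lemma fin_delta (T : finType) (P : T -> R -> Prop) :
  (forall x d d', 0 < d' -> d' <= d -> P x d -> P x d') ->
  (forall x, exists2 d, 0 < d & P x d) -> exists2 d, 0 < d & forall x, P x d.
Proof.
move=> mono ex.
suff [d d0 H] : exists2 d, 0 < d & forall x, x \in enum T -> P x d.
  by exists d => // x; apply: H; rewrite mem_enum.
elim: (enum T) => [|x r [d d0 IH]]; first by exists 1.
have [dx dx0 Hx] := ex x.
exists (Num.min d dx); first by rewrite lt_min d0 dx0.
move=> y; rewrite in_cons => /orP[/eqP -> | yr].
  by apply: mono Hx; rewrite ?lt_min ?d0 ?dx0 // ge_min lexx orbT.
by apply: mono (IH _ yr); rewrite ?lt_min ?d0 ?dx0 // ge_min lexx.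
Qed.

Lemma cont_mx_cm N (F : UI -> 'M[C]_N) : cont_mx F <-> cm F.
Proof.
split.
  move=> cF i j; split=> t eps e0; have [d d0 H] := cF t eps e0;
    exists d => // s hs; have [] := H s hs i j => //.
move=> cF t eps e0.
pose P (x : 'I_N * 'I_N) d := forall s : UI, `|sval s - sval t| < d ->
   `|complex.Re (F s x.1 x.2) - complex.Re (F t x.1 x.2)| < eps /\
   `|complex.Im (F s x.1 x.2) - complex.Im (F t x.1 x.2)| < eps.
have [] := @fin_delta _ P.
- move=> x d d' d'0 le H s hs; apply: H; exact: lt_le_trans le.
- move=> [i j]; have [c1 c2] := cF i j.
  have [d1 d10 H1] := c1 t eps e0; have [d2 d20 H2] := c2 t eps e0.
  exists (Num.min d1 d2); first by rewrite lt_min d10 d20.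
  move=> s; rewrite lt_min => /andP[s1 s2]; split; [exact: H1|exact: H2].
- move=> d d0 H; exists d => // s hs i j; exact: (H (i, j) s hs).
Qed.

Lemma cm_const m n (A : 'M[C]_(m, n)) : cm (fun _ => A).
Proof. move=> i j; exact: cc_const. Qed.

Lemma cm_add m n (F G : UI -> 'M[C]_(m, n)) : cm F -> cm G -> cm (fun t => F t + G t).
Proof. by move=> cF cG i j; apply: cc_ext (cc_add (cF i j) (cG i j)) => t; rewrite mxE. Qed.

Lemma cm_mul m n p (F : UI -> 'M[C]_(m, n)) (G : UI -> 'M[C]_(n, p)) :
  cm F -> cm G -> cm (fun t => F t *m G t).
Proof.
move=> cF cG i j; apply: cc_ext (cc_sum (fun k => cc_mul (cF i k) (cG k j))) => t.
by rewrite mxE.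
Qed.

Definition adjr m n (A : 'M[C]_(m, n)) : 'M[C]_(n, m) := map_mx (@conjc R) A^T.

Lemma cm_adj m n (F : UI -> 'M[C]_(m, n)) : cm F -> cm (fun t => adjr (F t)).
Proof. by move=> cF i j; apply: cc_ext (cc_conj (cF j i)) => t; rewrite !mxE. Qed.

Lemma cm_block m1 m2 n1 n2 (A : UI -> 'M[C]_(m1, n1)) (B : UI -> 'M[C]_(m1, n2))
  (Cc : UI -> 'M[C]_(m2, n1)) (D : UI -> 'M[C]_(m2, n2)) :
  cm A -> cm B -> cm Cc -> cm D -> cm (fun t => block_mx (A t) (B t) (Cc t) (D t)).
Proof.
move=> cA cB cC cD i j.
case: (split_ordP i) => i' ->; case: (split_ordP j) => j' ->.
- by apply: cc_ext (cA i' j') => t; rewrite block_mxEul.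
- by apply: cc_ext (cB i' j') => t; rewrite block_mxEur.
- by apply: cc_ext (cC i' j') => t; rewrite block_mxEdl.
- by apply: cc_ext (cD i' j') => t; rewrite block_mxEdr.
Qed.

Lemma cm_tens m1 n1 m2 n2 (A : 'M[C]_(m1, n1)) (F : UI -> 'M[C]_(m2, n2)) :
  cm F -> cm (fun t => A *t F t).
Proof.
move=> cF i j; case: (mxtens_indexP i) => i1 i2; case: (mxtens_indexP j) => j1 j2.
by apply: cc_ext (cc_mul (cc_const (A i1 j1)) (cF i2 j2)) => t; rewrite tensmxE.
Qed.

End CCont.

Section Unitary.
Variable R : realType.
Local Notation UI := (unit_interval R).
Local Notation C := (R[i]).

Lemma adjr_mul m n p (A : 'M[C]_(m, n)) (B : 'M[C]_(n, p)) :
  adjr (A *m B) = adjr B *m adjr A.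
Proof. by rewrite /adjr trmx_mul map_mxM. Qed.

Lemma adjrD m n (A B : 'M[C]_(m, n)) : adjr (A + B) = adjr A + adjr B.
Proof. by apply/matrixP => i j; rewrite !mxE rmorphD. Qed.

Lemma adjrZ m n (c : C) (A : 'M[C]_(m, n)) : adjr (c *: A) = conjc c *: adjr A.
Proof. by apply/matrixP => i j; rewrite !mxE rmorphM. Qed.

Lemma adjrK m n (A : 'M[C]_(m, n)) : adjr (adjr A) = A.
Proof. by apply/matrixP => i j; rewrite !mxE conjcK. Qed.

Lemma adjr1 m : adjr (1%:M : 'M[C]_m) = 1%:M.
Proof. by rewrite /adjr trmx1 map_mx1. Qed.

Lemma adjr0 m n : adjr (0 : 'M[C]_(m, n)) = 0.
Proof. by apply/matrixP => i j; rewrite !mxE conjc0. Qed.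

Lemma adjr_block m1 m2 n1 n2 (A : 'M[C]_(m1, n1)) (B : 'M[C]_(m1, n2))
  (Cc : 'M[C]_(m2, n1)) (D : 'M[C]_(m2, n2)) :
  adjr (block_mx A B Cc D) = block_mx (adjr A) (adjr Cc) (adjr B) (adjr D).
Proof. by rewrite /adjr tr_block_mx map_block_mx. Qed.

Lemma adjr_tens m1 n1 m2 n2 (A : 'M[C]_(m1, n1)) (B : 'M[C]_(m2, n2)) :
  adjr (A *t B) = adjr A *t adjr B.
Proof. by rewrite /adjr trmx_tens map_mxT. Qed.

Lemma adjr_perm m (s : {perm 'I_m}) : adjr (perm_mx s : 'M[C]_m) = perm_mx s^-1.
Proof. by rewrite /adjr tr_perm_mx; apply/matrixP => i j; rewrite !mxE conjc_nat. Qed.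

Lemma complex_ext (u v : C) :
  complex.Re u = complex.Re v -> complex.Im u = complex.Im v -> u = v.
Proof. by case: u => a b; case: v => c d /= -> ->. Qed.

Definition den (t : UI) : R := (1 - sval t) ^+ 2 + sval t ^+ 2.
Definition cx (t : UI) : R := (1 - sval t) ^+ 2 / den t.
Definition cy (t : UI) : R := - (sval t * (1 - sval t)) / den t.
Definition cpath (t : UI) : C := (cx t +i* cy t)%C.

Lemma den_ge (t : UI) : 2^-1 <= den t.
Proof. rewrite /den; set u := sval t; have := sqr_ge0 (2 * u - 1); nra. Qed.

Lemma den_neq0 (t : UI) : den t != 0.
Proof. by apply/negP => /eqP e; have := den_ge t; rewrite e; lra. Qed.

Lemma rc_den : rc den.
Proof.
have c1 : rc (fun t : UI => 1 - sval t) by apply: rc_add; [apply: rc_const|apply: rc_opp; apply: rc_val].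
apply: rc_ext (rc_add (rc_mul c1 c1) (rc_mul (@rc_val R) (@rc_val R))) => t.
by rewrite /den !expr2.
Qed.

Lemma cc_cpath : cc cpath.
Proof.
have ci : rc (fun t => (den t)^-1).
  by apply: (@rc_inv _ _ (2^-1)) => //; [rewrite invr_gt0 ltr0n | apply: den_ge | apply: rc_den].
have c1 : rc (fun t : UI => 1 - sval t) by apply: rc_add; [apply: rc_const|apply: rc_opp; apply: rc_val].
apply: cc_complex.
  by apply: rc_ext (rc_mul (rc_mul c1 c1) ci) => t; rewrite /cx expr2.
by apply: rc_ext (rc_mul (rc_opp (rc_mul (@rc_val R) c1)) ci) => t; rewrite /cy.
Qed.

Lemma cpath_id t : cpath t + conjc (cpath t) = cpath t * conjc (cpath t) + cpath t * conjc (cpath t).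
Proof.
have d0 := den_neq0 t.
apply: complex_ext; rewrite /cpath /= ?ReD ?ImD /=.
  move: d0; rewrite /cx /cy /den => d0; field => //.
by ring.
Qed.

Lemma cpath0 : cpath (ui0 R) = 1.
Proof.
have d0 := den_neq0 (ui0 R).
apply: complex_ext => //=; rewrite /cx /cy /den /= (_ : (1:R) - 0 = 1); try lra;
  by rewrite expr1n expr0n addr0 ?divr1 // mul0r oppr0 mul0r.
Qed.

Lemma cpath1 : cpath (ui1 R) = 0.
Proof.
apply: complex_ext => //=; rewrite /cx /cy /den /= subrr.
  by rewrite expr0n mul0r.
by rewrite mulr0 oppr0 mul0r.
Qed.

Lemma unit_lemma m (P : 'M[C]_m) (c d : C) : P *m P = 1%:M -> c + d = c * d + c * d ->
  (c *: 1%:M + (1 - c) *: P) *m (d *: 1%:M + (1 - d) *: P) = 1%:M.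
Proof.
move=> PP e.
rewrite mulmxDl !mulmxDr -!scalemxAl -!scalemxAr !mul1mx !mulmx1 PP !scalerA.
rewrite [X in X + _ = _]addrC addrACA -!scalerDl.
have -> : c * d + (1 - c) * (1 - d) = 1.
  by rewrite (_ : c * d + (1 - c) * (1 - d) = 1 + (c * d + c * d - (c + d))); [rewrite e subrr addr0|ring].
have -> : c * (1 - d) + (1 - c) * d = 0.
  by rewrite (_ : c * (1 - d) + (1 - c) * d = (c + d) - (c * d + c * d)); [rewrite e subrr|ring].
by rewrite scale1r scale0r add0r.
Qed.

Definition Rmat m (s : {perm 'I_m}) (t : UI) : 'M[C]_m :=
  cpath t *: 1%:M + (1 - cpath t) *: perm_mx s.

Lemma cm_scale m n (g : UI -> C) (F : UI -> 'M[C]_(m, n)) :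
  cc g -> cm F -> cm (fun t => g t *: F t).
Proof. by move=> cg cF i j; apply: cc_ext (cc_mul cg (cF i j)) => t; rewrite mxE. Qed.

Lemma cm_Rmat m s : cm (@Rmat m s).
Proof.
have c1 : cc (fun t => 1 - cpath t).
  by apply: cc_ext (cc_add (cc_const 1) (cc_mul (cc_const (-1)) cc_cpath)) => t; rewrite mulN1r.
by apply: cm_add; apply: cm_scale => //; [exact: cc_cpath | exact: cm_const | exact: cm_const].
Qed.

Lemma Rmat_unitary m (x y : 'I_m) t :
  Rmat (tperm x y) t *m adjr (Rmat (tperm x y) t) = 1%:M /\
  adjr (Rmat (tperm x y) t) *m Rmat (tperm x y) t = 1%:M.
Proof.
have PP : perm_mx (tperm x y) *m perm_mx (tperm x y) = 1%:M :> 'M[C]_m.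
  by rewrite -perm_mxM tperm2 perm_mx1.
have adjR : adjr (Rmat (tperm x y) t) = conjc (cpath t) *: 1%:M + (1 - conjc (cpath t)) *: perm_mx (tperm x y).
  have cB : conjc (1 - cpath t) = 1 - conjc (cpath t).
    by case: (cpath t) => a b; apply: complex_ext => /=; ring.
  by rewrite /Rmat adjrD !adjrZ adjr1 adjr_perm tpermV cB.
rewrite adjR /Rmat; split; apply: unit_lemma => //.
  exact: cpath_id.
by rewrite addrC mulrC; apply: cpath_id.
Qed.

Lemma perm_path m (pi : {perm 'I_m}) : exists U : UI -> 'M[C]_m,
  [/\ cm U, forall t, U t *m adjr (U t) = 1%:M, forall t, adjr (U t) *m U t = 1%:M,
      U (ui0 R) = 1%:M & U (ui1 R) = perm_mx pi].
Proof.
have [ts -> _] := prod_tpermP pi.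
elim: ts => [|[x y] ts [U [cU U1 U2 U0 UI1]]].
  exists (fun _ => 1%:M); split; rewrite ?big_nil ?perm_mx1 ?adjr1 ?mulmx1 //.
  exact: cm_const.
exists (fun t => Rmat (tperm x y) t *m U t); split.
- exact: cm_mul (cm_Rmat _) cU.
- move=> t; rewrite adjr_mul mulmxA -(mulmxA (Rmat _ t)) U1 mulmx1.
  by case: (Rmat_unitary x y t).
- move=> t; rewrite adjr_mul mulmxA -(mulmxA (adjr (U t))).
  by case: (Rmat_unitary x y t) => _ ->; rewrite mulmx1.
- by rewrite U0 mulmx1 /Rmat cpath0 subrr scale0r addr0 scale1r.
- by rewrite UI1 big_cons perm_mxM /Rmat cpath1 scale0r add0r subr0 scale1r.
Qed.

End Unitary.

Section Assemble.
Variable R : realType.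
Local Notation UI := (unit_interval R).
Local Notation C := (R[i]).

Lemma assemble (p q p' q' M' : nat) (D : Z_alg R p q -> UI -> 'M[C]_M')
  (W : UI -> 'M[C]_(p' * q', M')) :
 (forall f g h : Z_alg R p q, (forall t, sval h t = sval f t + sval g t) -> forall t, D h t = D f t + D g t) ->
 (forall c (f h : Z_alg R p q), (forall t, sval h t = c *: sval f t) -> forall t, D h t = c *: D f t) ->
 (forall f g h : Z_alg R p q, (forall t, sval h t = sval f t *m sval g t) -> forall t, D h t = D f t *m D g t) ->
 (forall f h : Z_alg R p q, (forall t, sval h t = adj_mx (sval f t)) -> forall t, D h t = adjr (D f t)) ->
 (forall u : Z_alg R p q, (forall t, sval u t = 1%:M) -> forall t, D u t = 1%:M) ->
 (forall f, cm (D f)) ->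
 cm W -> (forall t, W t *m adjr (W t) = 1%:M) -> (forall t, adjr (W t) *m W t = 1%:M) ->
 (forall f, exists X : 'M_p', W (ui0 R) *m D f (ui0 R) *m adjr (W (ui0 R)) = X *t (1%:M : 'M_q')) ->
 (forall f, exists Y : 'M_q', W (ui1 R) *m D f (ui1 R) *m adjr (W (ui1 R)) = (1%:M : 'M_p') *t Y) ->
 exists phi : Z_alg R p q -> Z_alg R p' q', unital_star_hom phi.
Proof.
move=> Dadd Dscale Dmul Dadj Dunit Dcont Wc WW WW' E0 E1.
have inZ : forall f, in_Z (fun t => W t *m D f t *m adjr (W t)).
  move=> f; split; [|split]; [| exact: E0 | exact: E1].
  apply/cont_mx_cm; apply: cm_mul; [apply: cm_mul => // | exact: cm_adj].
pose phi (f : Z_alg R p q) : Z_alg R p' q' := exist _ _ (inZ f).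
exists phi; split => /=.
- move=> f g h e t; by rewrite (Dadd f g h e) mulmxDr mulmxDl.
- move=> c f h e t; by rewrite (Dscale c f h e) -scalemxAr -scalemxAl.
- move=> f g h e t; rewrite (Dmul f g h e).
  by rewrite !mulmxA -[W t *m D f t *m adjr (W t) *m W t]mulmxA WW' mulmx1.
- move=> f h e t; rewrite (Dadj f h e) /adj_mx -/(adjr _) !adjr_mul adjrK.
  by rewrite mulmxA.
- move=> u e t; by rewrite (Dunit u e) mulmx1 WW.
Qed.

End Assemble.

Section TheD.
Variable R : realType.
Local Notation UI := (unit_interval R).
Local Notation C := (R[i]).
Variables (n' N' a1 b : nat).
Local Notation p := n'.+1.
Local Notation N := N'.+1.
Hypothesis hN : N = a1.+1 * p + b * p.+1.

Local Notation ZA := (Z_alg R p p.+1).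

Definition exA (M : 'M[C]_(p * p.+1)) : 'M[C]_p :=
  \matrix_(r, r') M (mxtens_index (r, ord0)) (mxtens_index (r', ord0)).
Definition exB (M : 'M[C]_(p * p.+1)) : 'M[C]_p.+1 :=
  \matrix_(s, s') M (mxtens_index (ord0, s)) (mxtens_index (ord0, s')).

Lemma exA_tens (X : 'M[C]_p) : exA (X *t 1%:M) = X.
Proof. by apply/matrixP => r r'; rewrite [LHS]mxE tensmxE mxE eqxx mulr1. Qed.
Lemma exB_tens (Y : 'M[C]_p.+1) : exB (1%:M *t Y) = Y.
Proof. by apply/matrixP => r r'; rewrite [LHS]mxE tensmxE mxE eqxx mul1r. Qed.

Lemma idx_eq m1 m2 (i i' : 'I_m1) (j j' : 'I_m2) :
  (mxtens_index (i, j) == mxtens_index (i', j')) = (i == i') && (j == j').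
Proof. by rewrite (can_eq (@mxtens_indexK _ _)) xpair_eqE. Qed.

Lemma tens11 m1 m2 : (1%:M : 'M[C]_m1) *t (1%:M : 'M[C]_m2) = 1%:M.
Proof.
apply/matrixP => x y; case: (mxtens_indexP x) => i j; case: (mxtens_indexP y) => i' j'.
by rewrite tensmxE !mxE idx_eq -natrM mulnb.
Qed.

Lemma tensD m1 n1 m2 n2 (A : 'M[C]_(m1, n1)) (B B' : 'M[C]_(m2, n2)) :
  A *t (B + B') = A *t B + A *t B'.
Proof. by apply/matrixP => x y; rewrite !mxE mulrDr. Qed.

Lemma tensZ m1 n1 m2 n2 (A : 'M[C]_(m1, n1)) (c : C) (B : 'M[C]_(m2, n2)) :
  A *t (c *: B) = c *: (A *t B).
Proof. by apply/matrixP => x y; rewrite !mxE mulrCA. Qed.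

Lemma tens1M m1 m2 n2 p2 (B : 'M[C]_(m2, n2)) (B' : 'M[C]_(n2, p2)) :
  (1%:M : 'M[C]_m1) *t (B *m B') = (1%:M *t B) *m (1%:M *t B').
Proof. by rewrite tensmx_mul mulmx1. Qed.

Definition Aof (f : ZA) := exA (sval f (ui0 R)).
Definition Bof (f : ZA) := exB (sval f (ui1 R)).

Definition dF := (a1.+1 + b) * (p * p.+1).
Definition dA := (a1 * N) * p.
Definition dB := (b * N.+1) * p.+1.

Definition Dm (f : ZA) (t : UI) : 'M[C]_(dF + (dA + dB)) :=
  block_mx ((1%:M : 'M_(a1.+1 + b)) *t sval f t) 0 0
    (block_mx ((1%:M : 'M_(a1 * N)) *t Aof f) 0 0 ((1%:M : 'M_(b * N.+1)) *t Bof f)).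

Lemma Dm_add (f g h : ZA) : (forall t, sval h t = sval f t + sval g t) ->
  forall t, Dm h t = Dm f t + Dm g t.
Proof.
move=> e t; rewrite /Dm /Aof /Bof !e.
have eA : forall M M', exA (M + M') = exA M + exA M'.
  by move=> M M'; apply/matrixP => r r'; rewrite !mxE.
have eB : forall M M', exB (M + M') = exB M + exB M'.
  by move=> M M'; apply/matrixP => r r'; rewrite !mxE.
by rewrite eA eB !tensD !add_block_mx !addr0.
Qed.

Lemma Dm_scale c (f h : ZA) : (forall t, sval h t = c *: sval f t) ->
  forall t, Dm h t = c *: Dm f t.
Proof.
move=> e t; rewrite /Dm /Aof /Bof !e.
have eA : forall M, exA (c *: M) = c *: exA M.
  by move=> M; apply/matrixP => r r'; rewrite !mxE.
have eB : forall M, exB (c *: M) = c *: exB M.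
  by move=> M; apply/matrixP => r r'; rewrite !mxE.
by rewrite eA eB !tensZ !scale_block_mx !scaler0.
Qed.

Lemma Dm_mul (f g h : ZA) : (forall t, sval h t = sval f t *m sval g t) ->
  forall t, Dm h t = Dm f t *m Dm g t.
Proof.
move=> e t.
have [_ [[Af eAf] [Bf eBf]]] := svalP f.
have [_ [[Ag eAg] [Bg eBg]]] := svalP g.
have hA : Aof h = Aof f *m Aof g.
  by rewrite /Aof e eAf eAg tensmx_mul mulmx1 !exA_tens.
have hB : Bof h = Bof f *m Bof g.
  by rewrite /Bof e eBf eBg tensmx_mul mulmx1 !exB_tens.
rewrite /Dm hA hB e !mulmx_block !mulmx0 !mul0mx !addr0 !add0r.
by rewrite !tens1M.
Qed.

Lemma Dm_adj (f h : ZA) : (forall t, sval h t = adj_mx (sval f t)) ->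
  forall t, Dm h t = adjr (Dm f t).
Proof.
move=> e t.
have hA : Aof h = adjr (Aof f).
  by apply/matrixP => r r'; rewrite /Aof e !mxE.
have hB : Bof h = adjr (Bof f).
  by apply/matrixP => r r'; rewrite /Bof e !mxE.
by rewrite /Dm hA hB e !adjr_block !adjr0 !adjr_tens !adjr1.
Qed.

Lemma Dm_unit (u : ZA) : (forall t, sval u t = 1%:M) -> forall t, Dm u t = 1%:M.
Proof.
move=> e t.
have hA : Aof u = 1%:M by apply/matrixP => r r'; rewrite /Aof e !mxE idx_eq eqxx andbT.
have hB : Bof u = 1%:M by apply/matrixP => r r'; rewrite /Bof e !mxE idx_eq eqxx.
by rewrite /Dm hA hB e !tens11 -!scalar_mx_block.
Qed.

Lemma Dm_cont (f : ZA) : cm (Dm f).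
Proof.
have [cf _] := svalP f.
apply: cm_block; try apply: cm_const.
by apply: cm_tens; apply/cont_mx_cm.
Qed.


Inductive lbl := LF of nat & 'I_p & 'I_p.+1 | LA of nat & 'I_p | LB of nat & 'I_p.+1.

Definition valid (l : lbl) : bool :=
  match l with LF φ _ _ => (φ < a1.+1 + b)%N | LA κ _ => (κ < a1 * N)%N | LB κ _ => (κ < b * N.+1)%N end.

Definition labn (l : lbl) : nat :=
  match l with
  | LF φ r s => φ * (p * p.+1) + (r * p.+1 + s)
  | LA κ r => dF + (κ * p + r)
  | LB κ s => dF + (dA + (κ * p.+1 + s))
  end%N.

Lemma labpos : (0 < dF + (dA + dB))%N.
Proof. by rewrite /dF addn_gt0 !muln_gt0. Qed.

Definition lab0 : 'I_(dF + (dA + dB)) := Ordinal labpos.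
Definition mk (l : lbl) : 'I_(dF + (dA + dB)) := insubd lab0 (labn l).

Lemma mkF φ r s (H : (φ < a1.+1 + b)%N) :
  mk (LF φ r s) = lshift (dA + dB) (mxtens_index (Ordinal H, mxtens_index (r, s))).
Proof.
apply: val_inj; rewrite /mk val_insubd /=.
by have := ltn_ord (lshift (dA + dB) (mxtens_index (Ordinal H, mxtens_index (r, s)))) => /= ->.
Qed.

Lemma mkA κ r (H : (κ < a1 * N)%N) :
  mk (LA κ r) = rshift dF (lshift dB (mxtens_index (Ordinal H, r))).
Proof.
apply: val_inj; rewrite /mk val_insubd /=.
by have := ltn_ord (rshift dF (lshift dB (mxtens_index (Ordinal H, r)))) => /= ->.
Qed.

Lemma mkB κ s (H : (κ < b * N.+1)%N) :
  mk (LB κ s) = rshift dF (rshift dA (mxtens_index (Ordinal H, s))).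
Proof.
apply: val_inj; rewrite /mk val_insubd /=.
by have := ltn_ord (rshift dF (rshift dA (mxtens_index (Ordinal H, s)))) => /= ->.
Qed.

Definition sem (f : ZA) (t : UI) (l l' : lbl) : C :=
  match l, l' with
  | LF φ r s, LF φ' r' s' => (φ == φ')%:R * sval f t (mxtens_index (r, s)) (mxtens_index (r', s'))
  | LA κ r, LA κ' r' => (κ == κ')%:R * Aof f r r'
  | LB κ s, LB κ' s' => (κ == κ')%:R * Bof f s s'
  | _, _ => 0
  end.

Lemma D_mk f t l l' : valid l -> valid l' -> Dm f t (mk l) (mk l') = sem f t l l'.
Proof.
case: l => [φ r s|κ r|κ s] /= H; case: l' => [φ' r' s'|κ' r'|κ' s'] /= H';
rewrite ?(mkF r s H) ?(mkA r H) ?(mkB s H) ?(mkF r' s' H') ?(mkA r' H') ?(mkB s' H') /Dm;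
rewrite ?block_mxEul ?block_mxEur ?block_mxEdl ?block_mxEdr;
rewrite ?block_mxEul ?block_mxEur ?block_mxEdl ?block_mxEdr ?tensmxE ?mxE //.
Qed.

Local Open Scope nat_scope.

Lemma lt_muladd c r a d : (r < d)%N -> (c < a)%N -> (c * d + r < a * d)%N.
Proof.
move=> rd ca; apply: (@leq_trans (c.+1 * d)); first by rewrite mulSn; lia.
by rewrite leq_mul2r ca orbT.
Qed.

Lemma divD d c r : (r < d)%N -> ((c * d + r) %/ d = c)%N.
Proof. by move=> rd; rewrite divnMDl ?(leq_ltn_trans _ rd) // divn_small // addn0. Qed.

Lemma modD d c r : (r < d)%N -> ((c * d + r) %% d = r)%N.
Proof. by move=> rd; rewrite modnMDl modn_small. Qed.

Lemma eq_muladd d c r c' r' : (r < d)%N -> (r' < d)%N ->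
  (c * d + r == c' * d + r')%N = (c == c') && (r == r').
Proof. by move=> h h'; rewrite eq_addl_mul // xpair_eqE. Qed.

Lemma divmod_eq d x y : (0 < d)%N -> ((x %/ d == y %/ d)%N && (x %% d == y %% d)%N) = (x == y).
Proof.
move=> d0; apply/idP/idP; last by move/eqP ->; rewrite !eqxx.
by case/andP => /eqP e1 /eqP e2; rewrite (divn_eq x d) (divn_eq y d) e1 e2.
Qed.

Lemma inord_eq m k k' : (k < m.+1)%N -> (k' < m.+1)%N ->
  (inord k == inord k' :> 'I_m.+1) = (k == k').
Proof. by move=> h h'; rewrite -val_eqE /= !inordK. Qed.

Lemma cntF : ((a1.+1 + b) * p.+1 = N + a1.+1)%N.
Proof. rewrite hN mulnDl mulnS; lia. Qed.

Lemma cntN1 : (N.+1 = a1 * p + b.+1 * p.+1)%N.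
Proof. rewrite hN !mulSn; lia. Qed.

Lemma regN i : (i < N)%N ->
  (exists c r, [/\ (r < p)%N, (c < a1.+1)%N & i = c * p + r]) \/
  (exists c s, [/\ (s < p.+1)%N, (c < b)%N & i = a1.+1 * p + (c * p.+1 + s)]).
Proof.
move=> iN; case: (ltnP i (a1.+1 * p)) => h.
  left; exists (i %/ p), (i %% p); split; [exact: ltn_pmod | by rewrite ltn_divLR | exact: divn_eq].
right; set i1 := (i - a1.+1 * p)%N.
have i1b : (i1 < b * p.+1)%N by rewrite /i1; move: iN; rewrite hN; lia.
exists (i1 %/ p.+1), (i1 %% p.+1); split; [exact: ltn_pmod | by rewrite ltn_divLR | ].
by rewrite -divn_eq /i1 subnKC.
Qed.

Lemma regJ j : (j < N.+1)%N ->
  (exists c r, [/\ (r < p)%N, (c < a1)%N & j = c * p + r]) \/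
  (exists c s, [/\ (s < p.+1)%N, (c < b.+1)%N & j = a1 * p + (c * p.+1 + s)]).
Proof.
move=> jN; case: (ltnP j (a1 * p)) => h.
  left; exists (j %/ p), (j %% p); split; [exact: ltn_pmod | by rewrite ltn_divLR | exact: divn_eq].
right; set j1 := (j - a1 * p)%N.
have j1b : (j1 < b.+1 * p.+1)%N by rewrite /j1; move: jN; rewrite cntN1; lia.
exists (j1 %/ p.+1), (j1 %% p.+1); split; [exact: ltn_pmod | by rewrite ltn_divLR | ].
by rewrite -divn_eq /j1 subnKC.
Qed.

Definition kap (c j : nat) : nat := if (c < a1)%N then (N.+1 + c)%N else j.

Definition desc0n (i j : nat) : lbl :=
  if (i < a1.+1 * p)%N then
    (if (i %/ p < a1)%N && (j < N)%N then LA (i %/ p * N + j) (inord (i %% p))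
     else LF (kap (i %/ p) j %/ p.+1) (inord (i %% p)) (inord (kap (i %/ p) j %% p.+1)))
  else LB (((i - a1.+1 * p) %/ p.+1) * N.+1 + j) (inord ((i - a1.+1 * p) %% p.+1)).

Definition desc1n (i j : nat) : lbl :=
  if (j < a1 * p)%N then LA (j %/ p * N + i) (inord (j %% p))
  else let m := ((j - a1 * p) %/ p.+1 * N + i)%N in
    if (m < b * N.+1)%N then LB m (inord ((j - a1 * p) %% p.+1))
    else LF ((m - b * N.+1) %/ p) (inord ((m - b * N.+1) %% p)) (inord ((j - a1 * p) %% p.+1)).

Lemma desc0A c r j : (r < p)%N -> (c < a1.+1)%N ->
  desc0n (c * p + r) j = if (c < a1)%N && (j < N)%N then LA (c * N + j) (inord r)
     else LF (kap c j %/ p.+1) (inord r) (inord (kap c j %% p.+1)).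
Proof. by move=> rp ca; rewrite /desc0n lt_muladd // divD // modD. Qed.

Lemma desc0B c s j : (s < p.+1)%N ->
  desc0n (a1.+1 * p + (c * p.+1 + s)) j = LB (c * N.+1 + j) (inord s).
Proof.
move=> sp; rewrite /desc0n ltnNge leq_addr /= addKn divD // modD //.
Qed.

Lemma desc1A c r i : (r < p)%N -> (c < a1)%N ->
  desc1n i (c * p + r) = LA (c * N + i) (inord r).
Proof. by move=> rp ca; rewrite /desc1n lt_muladd // divD // modD. Qed.

Lemma desc1B c s i : (s < p.+1)%N ->
  desc1n i (a1 * p + (c * p.+1 + s)) =
  if (c * N + i < b * N.+1)%N then LB (c * N + i) (inord s)
  else LF ((c * N + i - b * N.+1) %/ p) (inord ((c * N + i - b * N.+1) %% p)) (inord s).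
Proof. by move=> sp; rewrite /desc1n ltnNge leq_addr /= addKn divD // modD. Qed.

Local Open Scope ring_scope.
Local Open Scope nat_scope.

Lemma valid0 i j : i < N -> j < N.+1 -> valid (desc0n i j).
Proof.
move=> iN jN; case: (regN iN) => [[c [r [rp ca ->]]] | [c [s [sp cb ->]]]].
  rewrite desc0A //; case: ifP => [/andP[ca1 jN']|_] /=; first by apply: lt_muladd.
  by rewrite ltn_divLR // cntF /kap; case: ifP => ?; lia.
by rewrite desc0B //=; apply: lt_muladd.
Qed.

Lemma valid1 i j : i < N -> j < N.+1 -> valid (desc1n i j).
Proof.
move=> iN jN; case: (regJ jN) => [[c [r [rp ca ->]]] | [c [s [sp cb ->]]]].
  by rewrite desc1A //=; apply: lt_muladd.
rewrite desc1B //; case: ifP => H //=.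
have h1 : c * N + i < N + b * N by rewrite -mulSn; apply: lt_muladd.
rewrite ltn_divLR //; move: H h1; rewrite mulnDl !mulnS; lia.
Qed.

Lemma kap_eq c j c' j' : c < a1.+1 -> c' < a1.+1 -> j < N.+1 -> j' < N.+1 ->
  ~~ ((c < a1) && (j < N)) -> ~~ ((c' < a1) && (j' < N)) ->
  (kap c j == kap c' j') = (c == c') && (j == j').
Proof. rewrite /kap !negb_and -!leqNgt; case: ifP; case: ifP; lia. Qed.

Lemma inj0 i j i' j' : i < N -> j < N.+1 -> i' < N -> j' < N.+1 ->
  desc0n i j = desc0n i' j' -> i = i' /\ j = j'.
Proof.
move=> iN jN iN' jN'.
case: (regN iN) => [[c [r [rp ca ->]]] | [c [s [sp cb ->]]]];
case: (regN iN') => [[c' [r' [rp' ca' ->]]] | [c' [s' [sp' cb' ->]]]];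
  rewrite ?desc0B ?desc0A //; try by case: ifP => _ [].
- case: ifP => H1; case: ifP => H2 // .
    case => /eqP e1 /(congr1 val) /=; rewrite !inordK // => ->.
    move: e1; case/andP: H1 => _ H1; case/andP: H2 => _ H2.
    by rewrite eq_muladd // => /andP[/eqP -> /eqP ->].
  case => e1 /(congr1 val) /= e2 /(congr1 val) /= e3; move: e2; rewrite !inordK // => ->.
  move: e3; rewrite !inordK ?ltn_mod // => e3.
  have : kap c j == kap c' j' by rewrite -(divmod_eq _ _ (ltn0Sn p)) e1 e3 !eqxx.
  by rewrite kap_eq ?H1 ?H2 // => /andP[/eqP -> /eqP ->].
- case => /eqP e1 /(congr1 val) /=; rewrite !inordK // => ->.
  by move: e1; rewrite eq_muladd // => /andP[/eqP -> /eqP ->].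
Qed.

Lemma inj1 i j i' j' : i < N -> j < N.+1 -> i' < N -> j' < N.+1 ->
  desc1n i j = desc1n i' j' -> i = i' /\ j = j'.
Proof.
move=> iN jN iN' jN'.
case: (regJ jN) => [[c [r [rp ca ->]]] | [c [s [sp cb ->]]]];
case: (regJ jN') => [[c' [r' [rp' ca' ->]]] | [c' [s' [sp' cb' ->]]]];
  rewrite ?desc1B ?desc1A //; try by case: ifP => _ [].
- case => /eqP e1 /(congr1 val) /=; rewrite !inordK // => ->.
  by move: e1; rewrite eq_muladd // => /andP[/eqP -> /eqP ->].
- case: ifP => H1; case: ifP => H2 //.
    case => /eqP e1 /(congr1 val) /=; rewrite !inordK // => ->.
    by move: e1; rewrite eq_muladd // => /andP[/eqP -> /eqP ->].
  case => e1 /(congr1 val) /= e2 /(congr1 val) /= e3; move: e3; rewrite !inordK // => ->.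
  move: e2; rewrite !inordK ?ltn_mod // => e2.
  have : (c * N + i - b * N.+1) == (c' * N + i' - b * N.+1).
    by rewrite -(divmod_eq _ _ (ltn0Sn n')) e1 e2 !eqxx.
  rewrite eqn_sub2rE; last by rewrite leqNgt H2.
    2: by rewrite leqNgt H1.
  rewrite eq_muladd //.
  by case/andP => /eqP -> /eqP ->.
Qed.

Local Open Scope ring_scope.

Section Sem.
Variable f : ZA.

Lemma semAA (A : 'M[C]_p) : sval f (ui0 R) = A *t 1%:M ->
  forall c r c' r' j j', (r < p)%N -> (c < a1.+1)%N -> (r' < p)%N -> (c' < a1.+1)%N ->
  (j < N.+1)%N -> (j' < N.+1)%N ->
  sem f (ui0 R) (desc0n (c * p + r) j) (desc0n (c' * p + r') j') =
  ((c == c') && (j == j'))%:R * A (inord r) (inord r').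
Proof.
move=> eA c r c' r' j j' rp ca rp' ca' jN jN'.
rewrite !desc0A //; case: ifP => H1; case: ifP => H2 /=.
- rewrite /Aof eA exA_tens; case/andP: H1 => _ h1; case/andP: H2 => _ h2.
  by rewrite eq_muladd.
- have -> : (c == c') && (j == j') = false.
    by apply/negbTE/negP => /andP[/eqP ec /eqP ej]; move: H2; rewrite -ec -ej H1.
  by rewrite mul0r.
- have -> : (c == c') && (j == j') = false.
    by apply/negbTE/negP => /andP[/eqP ec /eqP ej]; move: H1; rewrite ec ej H2.
  by rewrite mul0r.
- rewrite eA tensmxE mxE inord_eq ?ltn_mod // [A _ _ * _]mulrC mulrA -natrM mulnb.
  by rewrite divmod_eq // (kap_eq ca ca' jN jN' (negbT H1) (negbT H2)).
Qed.

Lemma semBB t c s c' s' j j' : (s < p.+1)%N -> (s' < p.+1)%N ->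
  (j < N.+1)%N -> (j' < N.+1)%N ->
  sem f t (desc0n (a1.+1 * p + (c * p.+1 + s)) j) (desc0n (a1.+1 * p + (c' * p.+1 + s')) j') =
  ((c == c') && (j == j'))%:R * Bof f (inord s) (inord s').
Proof. by move=> sp sp' jN jN'; rewrite !desc0B //= eq_muladd. Qed.

Lemma semAB t c r c' s' j j' : (r < p)%N -> (c < a1.+1)%N -> (s' < p.+1)%N ->
  sem f t (desc0n (c * p + r) j) (desc0n (a1.+1 * p + (c' * p.+1 + s')) j') = 0.
Proof. by move=> *; rewrite desc0B // desc0A //; case: ifP. Qed.

Lemma semBA t c r c' s' j j' : (r < p)%N -> (c < a1.+1)%N -> (s' < p.+1)%N ->
  sem f t (desc0n (a1.+1 * p + (c' * p.+1 + s')) j') (desc0n (c * p + r) j) = 0.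
Proof. by move=> *; rewrite desc0B // desc0A //; case: ifP. Qed.

Lemma K0 (A : 'M[C]_p) : sval f (ui0 R) = A *t 1%:M ->
  forall i j i' j', (i < N)%N -> (j < N.+1)%N -> (i' < N)%N -> (j' < N.+1)%N ->
  sem f (ui0 R) (desc0n i j) (desc0n i' j') = (j == j')%:R * sem f (ui0 R) (desc0n i 0) (desc0n i' 0).
Proof.
move=> eA i j i' j' iN jN iN' jN'.
case: (regN iN) => [[c [r [rp ca ->]]] | [c [s [sp cb ->]]]];
case: (regN iN') => [[c' [r' [rp' ca' ->]]] | [c' [s' [sp' cb' ->]]]].
- by rewrite !(semAA eA) // eqxx andbT mulrA -natrM mulnb andbC.
- by rewrite !semAB // mulr0.
- by rewrite !semBA // mulr0.
- by rewrite !semBB // eqxx andbT mulrA -natrM mulnb andbC.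
Qed.

Lemma semCA t c r c' r' i i' : (r < p)%N -> (c < a1)%N -> (r' < p)%N -> (c' < a1)%N ->
  (i < N)%N -> (i' < N)%N ->
  sem f t (desc1n i (c * p + r)) (desc1n i' (c' * p + r')) =
  ((c == c') && (i == i'))%:R * Aof f (inord r) (inord r').
Proof. by move=> *; rewrite !desc1A //= eq_muladd. Qed.

Lemma semCB (B : 'M[C]_p.+1) : sval f (ui1 R) = 1%:M *t B ->
  forall c s c' s' i i', (s < p.+1)%N -> (s' < p.+1)%N -> (i < N)%N -> (i' < N)%N ->
  sem f (ui1 R) (desc1n i (a1 * p + (c * p.+1 + s))) (desc1n i' (a1 * p + (c' * p.+1 + s'))) =
  ((c == c') && (i == i'))%:R * B (inord s) (inord s').
Proof.
move=> eB c s c' s' i i' sp sp' iN iN'.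
rewrite !desc1B //; case: ifP => H1; case: ifP => H2 /=.
- by rewrite /Bof eB exB_tens eq_muladd.
- have -> : (c == c') && (i == i') = false.
    by apply/negbTE/negP => /andP[/eqP ec /eqP ei]; move: H2; rewrite -ec -ei H1.
  by rewrite mul0r.
- have -> : (c == c') && (i == i') = false.
    by apply/negbTE/negP => /andP[/eqP ec /eqP ei]; move: H1; rewrite ec ei H2.
  by rewrite mul0r.
- rewrite eB tensmxE mxE inord_eq ?ltn_mod // mulrA -natrM mulnb divmod_eq //.
  rewrite eqn_sub2rE; last by rewrite leqNgt H2.
    by rewrite eq_muladd.
  by rewrite leqNgt H1.
Qed.

Lemma semCAB t c r c' s' i i' : (r < p)%N -> (c < a1)%N -> (s' < p.+1)%N ->
  sem f t (desc1n i (c * p + r)) (desc1n i' (a1 * p + (c' * p.+1 + s'))) = 0.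
Proof. by move=> *; rewrite desc1B // desc1A //; case: ifP. Qed.

Lemma semCBA t c r c' s' i i' : (r < p)%N -> (c < a1)%N -> (s' < p.+1)%N ->
  sem f t (desc1n i' (a1 * p + (c' * p.+1 + s'))) (desc1n i (c * p + r)) = 0.
Proof. by move=> *; rewrite desc1B // desc1A //; case: ifP. Qed.

Lemma K1 (B : 'M[C]_p.+1) : sval f (ui1 R) = 1%:M *t B ->
  forall i j i' j', (i < N)%N -> (j < N.+1)%N -> (i' < N)%N -> (j' < N.+1)%N ->
  sem f (ui1 R) (desc1n i j) (desc1n i' j') = (i == i')%:R * sem f (ui1 R) (desc1n 0 j) (desc1n 0 j').
Proof.
move=> eB i j i' j' iN jN iN' jN'.
case: (regJ jN) => [[c [r [rp ca ->]]] | [c [s [sp cb ->]]]];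
case: (regJ jN') => [[c' [r' [rp' ca' ->]]] | [c' [s' [sp' cb' ->]]]].
- by rewrite !semCA // eqxx andbT mulrA -natrM mulnb andbC.
- by rewrite !semCAB // mulr0.
- by rewrite !semCBA // mulr0.
- by rewrite !(semCB eB) // eqxx andbT mulrA -natrM mulnb andbC.
Qed.

End Sem.

Lemma mk_inj l l' : valid l -> valid l' -> mk l = mk l' -> l = l'.
Proof.
case: l => [φ r s|κ r|κ s] /= H; case: l' => [φ' r' s'|κ' r'|κ' s'] /= H';
rewrite ?(mkF r s H) ?(mkA r H) ?(mkB s H) ?(mkF r' s' H') ?(mkA r' H') ?(mkB s' H') => /eqP;
rewrite !eq_shift ?idx_eq //.
- by case/and3P => /eqP [->] /eqP -> /eqP ->.
- by case/andP => /eqP [->] /eqP ->.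
- by case/andP => /eqP [->] /eqP ->.
Qed.

Definition sig0 (x : 'I_(N * N.+1)) : 'I_(dF + (dA + dB)) :=
  mk (desc0n (mxtens_unindex x).1 (mxtens_unindex x).2).
Definition sig1 (x : 'I_(N * N.+1)) : 'I_(dF + (dA + dB)) :=
  mk (desc1n (mxtens_unindex x).1 (mxtens_unindex x).2).

Lemma sig0_inj : injective sig0.
Proof.
move=> x y; case: (mxtens_indexP x) => i j; case: (mxtens_indexP y) => i' j'.
rewrite /sig0 !mxtens_indexK /= => /mk_inj.
rewrite !valid0 // => /(_ isT isT) /inj0 [] // /val_inj -> /val_inj -> //.
Qed.

Lemma sig1_inj : injective sig1.
Proof.
move=> x y; case: (mxtens_indexP x) => i j; case: (mxtens_indexP y) => i' j'.
rewrite /sig1 !mxtens_indexK /= => /mk_inj.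
rewrite !valid1 // => /(_ isT isT) /inj1 [] // /val_inj -> /val_inj -> //.
Qed.

Lemma dimeq : (dF + (dA + dB) = N * N.+1)%N.
Proof. rewrite /dF /dA /dB hN; lia. Qed.

Definition Qm (sg : 'I_(N * N.+1) -> 'I_(dF + (dA + dB))) : 'M[C]_(N * N.+1, dF + (dA + dB)) :=
  \matrix_(x, l) (sg x == l)%:R.

Lemma sum_delta m (k : 'I_m) (F : 'I_m -> C) : \sum_l (k == l)%:R * F l = F k.
Proof.
rewrite (bigD1 k) //= eqxx mul1r big1 ?addr0 // => l; rewrite eq_sym => /negbTE ->.
by rewrite mul0r.
Qed.

Lemma Qm_conj sg (Dx : 'M[C]_(dF + (dA + dB))) x y :
  (Qm sg *m Dx *m adjr (Qm sg)) x y = Dx (sg x) (sg y).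
Proof.
have e1 : forall l, (Qm sg *m Dx) x l = Dx (sg x) l.
  by move=> l; rewrite mxE; under eq_bigr => k _ do rewrite mxE; exact: sum_delta.
rewrite mxE; under eq_bigr => l _ do rewrite e1 !mxE conjc_nat mulrC.
exact: sum_delta.
Qed.

Lemma Qm_unit sg : injective sg -> Qm sg *m adjr (Qm sg) = 1%:M.
Proof.
move=> inj; apply/matrixP => x y; rewrite !mxE.
under eq_bigr => l _ do rewrite !mxE conjc_nat.
by rewrite sum_delta (inj_eq inj) eq_sym.
Qed.

Lemma Qm_unit' sg : injective sg -> adjr (Qm sg) *m Qm sg = 1%:M.
Proof.
move=> inj.
have onto : forall l, l \in codom sg.
  by move=> l; apply: inj_card_onto => //; rewrite !card_ord dimeq.
apply/matrixP => l l'; rewrite !mxE.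
under eq_bigr => x _ do rewrite !mxE conjc_nat.
have [x0 e] : exists x0, sg x0 = l by exists (iinv (onto l)); rewrite f_iinv.
rewrite (bigD1 x0) //= e eqxx mul1r big1 ?addr0 //.
move=> x nx; have -> : (sg x == l) = false.
  by apply/negbTE; apply: contra nx => /eqP exl; rewrite -(inj_eq inj) exl e.
by rewrite mul0r.
Qed.

Lemma mainD : exists phi : ZA -> Z_alg R N N.+1, unital_star_hom phi.
Proof.
have onto : forall l, l \in codom sig0.
  by move=> l; apply: inj_card_onto => //; [exact: sig0_inj | rewrite !card_ord dimeq].
pose pi' x := iinv (onto (sig1 x)).
have epi : forall x, sig0 (pi' x) = sig1 x by move=> x; rewrite f_iinv.
have pinj : injective pi' by move=> x y e; apply: sig1_inj; rewrite -!epi e.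
pose pi := perm pinj.
have [U [cU U1 U2 U0 UI1]] := perm_path R pi.
pose W t := U t *m Qm sig0.
have W0 : W (ui0 R) = Qm sig0 by rewrite /W U0 mul1mx.
have W1 : W (ui1 R) = Qm sig1.
  rewrite /W UI1 -row_permE; apply/matrixP => x l; rewrite !mxE permE epi //.
apply: (@assemble R p p.+1 N N.+1 (dF + (dA + dB)) Dm W).
- exact: Dm_add.
- exact: Dm_scale.
- exact: Dm_mul.
- exact: Dm_adj.
- exact: Dm_unit.
- exact: Dm_cont.
- by apply: cm_mul => //; apply: cm_const.
- move=> t; rewrite /W adjr_mul mulmxA -(mulmxA (U t)) Qm_unit ?mulmx1 //; exact: sig0_inj.
- move=> t; rewrite /W adjr_mul mulmxA -(mulmxA _ (adjr (U t))) U2 mulmx1 Qm_unit' //.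
  exact: sig0_inj.
- move=> f; have [_ [[A eA] _]] := svalP f.
  exists (\matrix_(i, i') sem f (ui0 R) (desc0n i 0) (desc0n i' 0)).
  rewrite W0; apply/matrixP => x y; rewrite Qm_conj.
  case: (mxtens_indexP x) => i j; case: (mxtens_indexP y) => i' j'.
  by rewrite /sig0 !mxtens_indexK /= D_mk ?valid0 // (K0 eA) // tensmxE !mxE mulrC.
- move=> f; have [_ [_ [B eB]]] := svalP f.
  exists (\matrix_(j, j') sem f (ui1 R) (desc1n 0 j) (desc1n 0 j')).
  rewrite W1; apply/matrixP => x y; rewrite Qm_conj.
  case: (mxtens_indexP x) => i j; case: (mxtens_indexP y) => i' j'.
  by rewrite /sig1 !mxtens_indexK /= D_mk ?valid1 // (K1 eB) // tensmxE !mxE.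
Qed.

End TheD.

Theorem lemma5p10 (R : realType) (n : nat) (hn : (0 < n)%N) :
  exists (k : nat) (phi : Z_alg R n n.+1 -> Z_alg R (2 ^ k) (2 ^ k).+1),
    (0 < k)%N /\ unital_star_hom phi.
Proof.
case: n hn => [//|n'] _.
have Nge : (n'.+1 * n'.+1 <= 2 ^ (n'.+1 + n'.+1))%N.
  by rewrite expnD leq_mul // ltnW // ltn_expl.
have N0 : (0 < 2 ^ (n'.+1 + n'.+1))%N by rewrite expn_gt0.
exists (n'.+1 + n'.+1)%N.
move: Nge N0; set N := (2 ^ (n'.+1 + n'.+1))%N => Nge N0.
set q := (N %/ n'.+1)%N; set r := (N %% n'.+1)%N.
have rp : (r < n'.+1)%N by rewrite ltn_mod.
have pq : (n'.+1 <= q)%N by rewrite leq_divRL.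
have eN : N = (q * n'.+1 + r)%N by rewrite /q /r -divn_eq.
have hN : N = ((q - r - 1).+1 * n'.+1 + r * n'.+2)%N.
  have rq : (r * n'.+1 <= q * n'.+1)%N by rewrite leq_mul2r; apply/orP; right; lia.
  rewrite (_ : (q - r - 1).+1 = q - r)%N; last lia.
  by rewrite eN mulnBl mulnS; lia.
have eN' : N = N.-1.+1 by rewrite prednK.
have hN' : N.-1.+1 = ((q - r - 1).+1 * n'.+1 + r * n'.+2)%N by rewrite -eN'.
have [phi hphi] := @mainD R n' N.-1 (q - r - 1) r hN'.
rewrite eN'; by exists phi.
Qed.
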